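(* Let $k\ge 0$ be an integer and let $T$ be the tree on $3k+4$ vertices obtained by taking $k+1$ disjoint copies of the star $K_{1,3}$ and identifying one leaf from each copy into a single vertex. Then $Z(T)=k+2$ and $Z_k(T)=k+1$.
   Context: Filling rule: if a filled vertex has exactly one unfilled neighbor (and any number of filled neighbors), that neighbor becomes filled; ''applying the filling rule in a subgraph $H$'' means applying it with neighborhoods taken in $H$. The $Z_q$-Game on $G$ ($q\ge 0$ an integer): initially all vertices are unfilled; a player repeatedly performs one of the following operations until all vertices are filled: (1) for one token, change any vertex from unfilled to filled; (2) at no cost, apply the filling rule in $G$; (3) if $F$ is the current set of filled vertices and $U_1,\dots,U_k$ are the vertex sets of the connected components of $G[V(G)\setminus F]$ with $k\ge q+1$, the player announces a selection of at least $q+1$ of the $U_i$ to an oracle (an adversary), the oracle returns a nonempty subset $\{U_{i_1},\dots,U_{i_\ell}\}$ of the selected components, and the player may at no cost apply the filling rule in $G[F\cup U_{i_1}\cup\cdots\cup U_{i_\ell}]$. $Z_q(G)$ is the minimum number of tokens with which the player can guarantee that all vertices become filled, regardless of the oracle's responses. The $Z$-Game is the same game with only operations (1) and (2) allowed, and $Z(G)$ (the zero forcing number) is the minimum number of tokens needed there to fill all vertices. *)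

(* Defs.v *)
From mathcomp Require Import all_boot.
Set Implicit Arguments.
Unset Strict Implicit.
Unset Printing Implicit Defensive.

(* A (simple) graph is given by a finite vertex type T and an adjacency
   relation e : rel T (symmetric and irreflexive for the graphs we use). *)

(* One application of the filling rule in the induced subgraph G[H]
   (H must contain the filled set F): the filled vertex u has v as its
   unique unfilled neighbour within H, and v becomes filled. *)
Definition fill_step (T : finType) (e : rel T) (H F : {set T}) (u v : T) : Prop :=
  [/\ u \in F, v \in H, v \notin F, e u v &
      forall w, w \in H -> e u w -> w \notin F -> w = v].

Definition unfilled_rel (T : finType) (e : rel T) (F : {set T}) : rel T :=
  [rel x y | [&& e x y, x \notin F & y \notin F]].

Definition is_component (T : finType) (e : rel T) (F U : {set T}) : Prop :=
  exists2 x, x \notin F & U = [set y | connect (unfilled_rel e F) x y].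

(* zq_win e oracle q F t : starting from the filled set F, the player can
   guarantee that all vertices become filled using at most t further tokens,
   whatever the oracle answers.  With oracle = false only operations (1) and
   (2) are allowed (the Z-Game); with oracle = true operation (3) with
   parameter q is also allowed (the Z_q-Game). *)
Inductive zq_win (T : finType) (e : rel T) (oracle : bool) (q : nat) :
    {set T} -> nat -> Prop :=
| zq_done (F : {set T}) (t : nat) : F = [set: T] -> zq_win e oracle q F t
| zq_token (F : {set T}) (t : nat) (v : T) : v \notin F -> zq_win e oracle q (v |: F) t ->
    zq_win e oracle q F t.+1
| zq_fill (F : {set T}) (t : nat) (u v : T) : fill_step e [set: T] F u v ->
    zq_win e oracle q (v |: F) t -> zq_win e oracle q F t
| zq_oracle (F : {set T}) (t : nat) (S : {set {set T}}) :
    oracle ->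
    (forall U, U \in S -> is_component e F U) ->
    q.+1 <= #|S| ->
    (forall S' : {set {set T}}, S' \subset S -> S' != set0 ->
       exists u v, fill_step e (F :|: \bigcup_(U in S') U) F u v /\
                   zq_win e oracle q (v |: F) t) ->
    zq_win e oracle q F t.

Definition is_min_tokens (T : finType) (e : rel T) (oracle : bool) (q m : nat) : Prop :=
  zq_win e oracle q set0 m /\ (forall t, zq_win e oracle q set0 t -> m <= t).

Definition is_Z (T : finType) (e : rel T) (m : nat) : Prop :=
  is_min_tokens e false 0 m.

Definition is_Zq (T : finType) (e : rel T) (q m : nat) : Prop :=
  is_min_tokens e true q m.

(* The tree of the statement: vertices are None (the identified leaf) and
   Some (i, j) for i < k+1, j < 3, where Some (i, 0) is the centre of the
   i-th copy of K_{1,3} and Some (i, 1), Some (i, 2) its two other leaves. *)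
Definition star_vertex (k : nat) : finType := option ('I_k.+1 * 'I_3)%type.

Definition star_tree (k : nat) : rel (star_vertex k) :=
  fun x y =>
    match x, y with
    | None, None => false
    | None, Some (_, j) => val j == 0
    | Some (_, j), None => val j == 0
    | Some (i, j), Some (i', j') =>
        (i == i') && (((val j == 0) && (val j' != 0)) || ((val j != 0) && (val j' == 0)))
    end.
Arguments star_tree k : clear implicits.

(* Main.v *)
Require Import Defs.
From mathcomp Require Import all_boot zify.
Set Implicit Arguments. Unset Strict Implicit. Unset Printing Implicit Defensive.

Section Tree.
Variable k : nat.
Local Notation T := (star_vertex k).
Local Notation e := (star_tree k).

Definition o0 : 'I_3 := @Ordinal 3 0 isT.
Definition o1 : 'I_3 := @Ordinal 3 1 isT.
Definition o2 : 'I_3 := @Ordinal 3 2 isT.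
Definition cc : T := None.
Definition sv (i : 'I_k.+1) : T := Some (i, o0).
Definition la (i : 'I_k.+1) : T := Some (i, o1).
Definition lb (i : 'I_k.+1) : T := Some (i, o2).

Lemma vcases (x : T) : x = cc \/ exists i, [\/ x = sv i, x = la i | x = lb i].
Proof.
case: x => [[i [[|[|[|j]]] Hj]]|]; [right; exists i..|left=>//].
- by constructor 1; rewrite /sv; congr (Some (_,_)); apply: val_inj.
- by constructor 2; rewrite /la; congr (Some (_,_)); apply: val_inj.
- by constructor 3; rewrite /lb; congr (Some (_,_)); apply: val_inj.
- by [].
Qed.

Lemma e_sym : symmetric e.
Proof.
move=> [[i j]|] [[i' j']|] //=.
by rewrite (eq_sym i); case: (nat_of_ord j == 0); case: (nat_of_ord j' == 0); rewrite /= ?andbF ?andbT ?orbF.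
Qed.

Lemma nbr_c y : e cc y -> exists i, y = sv i.
Proof.
case: y => [[i j]|] //= /eqP Hj; exists i; rewrite /sv; congr (Some (_,_)); exact: val_inj.
Qed.

Lemma nbr_s i y : e (sv i) y -> [\/ y = cc, y = la i | y = lb i].
Proof.
case: y => [[i' [[|[|[|j]]] Hj]]|] //=; rewrite ?andbT ?andbF //=.
- by move=> /eqP <-; constructor 2; rewrite /la; congr (Some (_,_)); apply: val_inj.
- by move=> /eqP <-; constructor 3; rewrite /lb; congr (Some (_,_)); apply: val_inj.
- by constructor 1.
Qed.

Lemma nbr_la i y : e (la i) y -> y = sv i.
Proof.
case: y => [[i' [[|[|[|j]]] Hj]]|] //=; rewrite ?andbT ?andbF //= => /eqP <-.
by rewrite /sv; congr (Some (_,_)); apply: val_inj.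
Qed.

Lemma nbr_lb i y : e (lb i) y -> y = sv i.
Proof.
case: y => [[i' [[|[|[|j]]] Hj]]|] //=; rewrite ?andbT ?andbF //= => /eqP <-.
by rewrite /sv; congr (Some (_,_)); apply: val_inj.
Qed.

Lemma e_cs i : e cc (sv i). Proof. by []. Qed.
Lemma e_sc i : e (sv i) cc. Proof. by []. Qed.
Lemma e_sa i : e (sv i) (la i). Proof. by rewrite /= eqxx. Qed.
Lemma e_sb i : e (sv i) (lb i). Proof. by rewrite /= eqxx. Qed.
Lemma e_as i : e (la i) (sv i). Proof. by rewrite /= eqxx. Qed.
Lemma e_bs i : e (lb i) (sv i). Proof. by rewrite /= eqxx. Qed.

Lemma sv_inj : injective sv. Proof. by move=> i j [->]. Qed.
Lemma la_inj : injective la. Proof. by move=> i j [->]. Qed.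
Lemma lb_inj : injective lb. Proof. by move=> i j [->]. Qed.
Lemma neq_cs i : cc <> sv i. Proof. by []. Qed.
Lemma neq_ca i : cc <> la i. Proof. by []. Qed.
Lemma neq_cb i : cc <> lb i. Proof. by []. Qed.
Lemma neq_sa i j : sv i <> la j. Proof. by case. Qed.
Lemma neq_sb i j : sv i <> lb j. Proof. by case. Qed.
Lemma neq_ab i j : la i <> lb j. Proof. by case. Qed.

Section Ind.
Variables (b : bool) (q : nat) (P : {set T} -> nat -> Prop).
Hypotheses
 (Hd : forall (F : {set T}) t, F = setT -> P F t)
 (Ht : forall (F : {set T}) t v, v \notin F -> zq_win e b q (v |: F) t -> P (v |: F) t -> P F t.+1)
 (Hf : forall (F : {set T}) t u v, fill_step e setT F u v -> zq_win e b q (v |: F) t -> P (v |: F) t -> P F t)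
 (Ho : forall F t (S : {set {set T}}), b -> (forall U, U \in S -> is_component e F U) -> q.+1 <= #|S| ->
   (forall S' : {set {set T}}, S' \subset S -> S' != set0 ->
      exists u v, [/\ fill_step e (F :|: \bigcup_(U in S') U) F u v, zq_win e b q (v |: F) t & P (v |: F) t]) -> P F t).

Fixpoint zq_ind2 F t (h : zq_win e b q F t) {struct h} : P F t :=
 match h in zq_win _ _ _ F t return P F t with
 | zq_done F t E => Hd t E
 | zq_token F t v hv hw => Ht hv hw (zq_ind2 hw)
 | zq_fill F t u v hf hw => Hf hf hw (zq_ind2 hw)
 | zq_oracle F t SS hb hc hs hall => Ho hb hc hs (fun S' h1 h2 =>
     match hall S' h1 h2 with
     | ex_intro u (ex_intro v (conj hf hw)) => ex_intro _ u (ex_intro _ v (And3 hf hw (zq_ind2 hw)))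
     end)
 end.
End Ind.

Definition dd (F : {set T}) i := (la i \notin F) && (lb i \notin F).
Definition SD (F : {set T}) := #|[set i | dd F i]|.
Definition AllD (F : {set T}) := [forall i, dd F i].
Definition MS (F : {set T}) := #|[set i | sv i \notin F]|.
Definition II (F : {set T}) := AllD F && (MS F <= k).
Definition EE (F : {set T}) := (cc \notin F) && [forall i, ~~ ((la i \in F) && (lb i \in F))].

Lemma dd_U1 F v j : dd (v |: F) j = [&& dd F j, v != la j & v != lb j].
Proof.
rewrite /dd !in_setU1 !negb_or [la j == v]eq_sym [lb j == v]eq_sym.
by case: (v != la j); case: (v != lb j); case: (la j \in F); case: (lb j \in F).
Qed.

Lemma SD_le F : SD F <= k.+1.
Proof. by rewrite /SD; apply: leq_trans (max_card _) _; rewrite card_ord. Qed.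

Lemma SD_all F : AllD F -> SD F = k.+1.
Proof.
move=> /forallP H; rewrite /SD.
have ->: [set i | dd F i] = setT by apply/setP=> i; rewrite !inE H.
by rewrite cardsT card_ord.
Qed.

Lemma SD_sub F v : (forall j, dd F j -> (v != la j) && (v != lb j)) -> SD F <= SD (v |: F).
Proof.
move=> H; apply: subset_leq_card; apply/subsetP=> j; rewrite !inE dd_U1 => Hj.
by rewrite Hj H.
Qed.

Lemma SD_step F v : SD F <= (SD (v |: F)).+1.
Proof.
have [i0 Hi0] : exists i0, forall j, dd F j -> j = i0 \/ dd (v |: F) j.
  case: (vcases v) => [->|[i [->|->|->]]].
  - by exists ord0 => j Hj; right; rewrite dd_U1 Hj.
  - exists ord0 => j Hj; right; rewrite dd_U1 Hj /=.
    by apply/andP; split; apply/eqP=> E; [exact: (neq_sa E)|exact: (neq_sb E)].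
  - exists i => j Hj; case: (eqVneq j i) => [Eji|Hne]; first by left.
    right.
    rewrite dd_U1 Hj /=; apply/andP; split; apply/eqP; last by move=> E; exact: (neq_ab E).
    by move/la_inj=> E; rewrite E eqxx in Hne.
  - exists i => j Hj; case: (eqVneq j i) => [Eji|Hne]; first by left.
    right.
    rewrite dd_U1 Hj /=; apply/andP; split; apply/eqP; first by move=> E; exact: (neq_ab (esym E)).
    by move/lb_inj=> E; rewrite E eqxx in Hne.
have Hs : [set i | dd F i] \subset i0 |: [set i | dd (v |: F) i].
  by apply/subsetP=> j; rewrite !inE => /Hi0 [->|->]; rewrite ?eqxx ?orbT.
apply: leq_trans (subset_leq_card Hs) _.
by rewrite cardsU1; case: (_ \notin _).
Qed.

Lemma AllD_U1 F v : AllD (v |: F) -> AllD F.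
Proof. by move=> /forallP H; apply/forallP=> j; move: (H j); rewrite dd_U1 => /andP []. Qed.

Lemma MS_full F : ~~ (MS F <= k) -> forall i, sv i \notin F.
Proof.
move=> H i; apply/negP=> Hi; move: H; rewrite /MS -ltnNge => H.
have Hs : [set i | sv i \notin F] \subset [set~ i].
  by apply/subsetP=> j; rewrite !inE; apply: contra => /eqP ->.
have := leq_trans H (subset_leq_card Hs).
by rewrite cardsC1 card_ord ltnn.
Qed.

Lemma MS_notall F : MS F <= k -> exists i, sv i \in F.
Proof.
move=> H; apply/existsP; apply: contraTT H => /existsPn H.
rewrite -ltnNge /MS.
have ->: [set i | sv i \notin F] = setT by apply/setP=> i; rewrite !inE H.
by rewrite cardsT card_ord.
Qed.

Lemma II_step_gen F v : II F -> SD F + II (v |: F) <= SD (v |: F) + II F.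
Proof.
move=> ->; case IF': (II (v |: F)).
- move: IF' => /andP [AD _]; rewrite (SD_all AD) /= !addn1 ltnS; exact: SD_le.
- by rewrite /= addn0 addn1; apply: SD_step.
Qed.

Definition safe (F H : {set T}) :=
  (forall i, sv i \in F -> la i \notin F -> lb i \notin F ->
     (la i \in H -> lb i \in H) /\ (lb i \in H -> la i \in H)) /\
  (cc \in F -> (forall i, sv i \notin F) -> forall i, sv i \in H -> exists j, j != i /\ sv j \in H).

Lemma step_ok H F u v : safe F H -> fill_step e H F u v ->
  SD F + II (v |: F) <= SD (v |: F) + II F.
Proof.
move=> [s1 s2] [uF vH vF euv Hu].
case IF: (II F); first by move: (II_step_gen v IF); rewrite IF.
case IF': (II (v |: F)).
- exfalso; move: IF' => /andP [AD' MS'].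
  have AD : AllD F by apply: AllD_U1 AD'.
  have nMS : ~~ (MS F <= k) by move: IF; rewrite /II AD /= => ->.
  have allS := MS_full nMS.
  have [j Hj] := MS_notall MS'.
  move: Hj; rewrite in_setU1 (negbTE (allS j)) orbF => /eqP Ej; subst v.
  move: euv; rewrite e_sym => /nbr_s [Eu|Eu|Eu]; subst u.
  + have [j' [Hne Hj']] := s2 uF allS j vH.
    have := Hu _ Hj' (e_cs j') (allS j') => /sv_inj E; by rewrite E eqxx in Hne.
  + by move: (forallP AD j); rewrite /dd uF.
  + by move: (forallP AD j); rewrite /dd uF andbF.
- rewrite !addn0; apply: SD_sub => j Hd.
  move: (Hd); rewrite /dd => /andP [Ha Hb].
  apply/andP; split; apply/eqP=> Ev; subst v.
  + move: euv; rewrite e_sym => /nbr_la Eu; subst u.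
    have [h1 _] := s1 j uF Ha Hb.
    by have := Hu _ (h1 vH) (e_sb j) Hb => /esym /neq_ab.
  + move: euv; rewrite e_sym => /nbr_lb Eu; subst u.
    have [_ h2] := s1 j uF Ha Hb.
    by have := Hu _ (h2 vH) (e_sa j) Ha => /neq_ab.
Qed.

Lemma ur_sym F : symmetric (unfilled_rel e F).
Proof. move=> x y; rewrite /unfilled_rel /= (e_sym x y); by case: (x \in F); case: (y \in F); rewrite ?andbF. Qed.

Lemma comp_rep F U x : is_component e F U -> x \in U ->
  U = [set y | connect (unfilled_rel e F) x y].
Proof.
case=> x0 _ ->; rewrite inE => Hx; apply/setP=> y; rewrite !inE.
by rewrite (same_connect (sym_connect_sym (ur_sym F)) Hx).
Qed.

Lemma comp_eq F U1 U2 x : is_component e F U1 -> is_component e F U2 ->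
  x \in U1 -> x \in U2 -> U1 = U2.
Proof. by move=> H1 H2 X1 X2; rewrite (comp_rep H1 X1) (comp_rep H2 X2). Qed.

Lemma comp_iso F U z y : is_component e F U -> (forall w, e z w -> w \in F) ->
  z \in U -> y \in U -> y = z.
Proof.
move=> Hc Hz zU; rewrite (comp_rep Hc zU) inE => /connectP [p Hp ->].
case: p Hp => [//|w p] /= /andP [/and3P [ezw _ wF] _].
by rewrite (Hz _ ezw) in wF.
Qed.

Lemma la_iso (F : {set T}) i : sv i \in F -> forall w, e (la i) w -> w \in F.
Proof. by move=> H w /nbr_la ->. Qed.
Lemma lb_iso (F : {set T}) i : sv i \in F -> forall w, e (lb i) w -> w \in F.
Proof. by move=> H w /nbr_lb ->. Qed.

Lemma inH (F : {set T}) (S' : {set {set T}}) x :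
  x \in F :|: \bigcup_(U in S') U -> x \in F \/ exists2 U, U \in S' & x \in U.
Proof. by rewrite in_setU => /orP [->|/bigcupP [U HU xU]]; [left|right; exists U]. Qed.

Lemma inH2 (F : {set T}) (S' : {set {set T}}) x U : U \in S' -> x \in U -> x \in F :|: \bigcup_(U in S') U.
Proof. by move=> HU xU; rewrite in_setU; apply/orP; right; apply/bigcupP; exists U. Qed.

Definition openb (F : {set T}) i := (sv i \in F) && dd F i.

Lemma oracle_choice F (S : {set {set T}}) : 0 < k -> ~~ II F ->
  (forall U, U \in S -> is_component e F U) -> k.+1 <= #|S| ->
  exists S' : {set {set T}}, [/\ S' \subset S, S' != set0 & safe F (F :|: \bigcup_(U in S') U)].
Proof.
move=> k0 nII Hc HS.
pose special := (cc \in F) && [forall i, sv i \notin F].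
pose badU (U : {set T}) := [exists i, openb F i && ((la i \in U) || (lb i \in U))] ||
   (special && [exists i, sv i \in U]).
case: (boolP [exists U, (U \in S) && ~~ badU U]) => [/existsP [U /andP [US nb]]|/existsPn Hall].
  exists [set U]; split.
  - by rewrite sub1set.
  - by apply/set0Pn; exists U; rewrite set11.
  - split.
    + move=> i Si Ha Hb; split=> /inH [|[U' /set1P -> xU]]; rewrite ?(negbTE Ha) ?(negbTE Hb) //.
      * case/negP: nb; apply/orP; left; apply/existsP; exists i.
        by rewrite /openb Si /dd Ha Hb xU.
      * case/negP: nb; apply/orP; left; apply/existsP; exists i.
        by rewrite /openb Si /dd Ha Hb xU orbT.
    + move=> cF allS i /inH [|[U' /set1P -> xU]]; first by rewrite (negbTE (allS i)).
      case/negP: nb; apply/orP; right; rewrite /special cF /=.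
      by apply/andP; split; [apply/forallP|apply/existsP; exists i].
have allbad U : U \in S -> badU U by move=> HU; move: (Hall U); rewrite HU /= negbK.
case: (boolP [exists i, [&& openb F i, [exists U1, (U1 \in S) && (la i \in U1)] &
                              [exists U2, (U2 \in S) && (lb i \in U2)]]]).
  move=> /existsP [i /and3P [Hop /existsP [U1 /andP [U1S a1]] /existsP [U2 /andP [U2S b2]]]].
  move: (Hop); rewrite /openb /dd => /and3P [Si Ha Hb].
  exists [set U1; U2]; split.
  - by apply/subsetP=> U /set2P [->|->].
  - by apply/set0Pn; exists U1; rewrite set21.
  - split.
    + move=> j Sj Haj Hbj; split=> /inH [|[U' /set2P [->|->] xU]]; rewrite ?(negbTE Haj) ?(negbTE Hbj) //.
      * have E := comp_iso (Hc _ U1S) (la_iso Si) a1 xU.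
        move/la_inj: E => ->; exact: inH2 (set22 _ _) b2.
      * by have E := comp_iso (Hc _ U2S) (lb_iso Si) b2 xU; case: (neq_ab E).
      * by have E := comp_iso (Hc _ U1S) (la_iso Si) a1 xU; case: (neq_ab (esym E)).
      * have E := comp_iso (Hc _ U2S) (lb_iso Si) b2 xU.
        move/lb_inj: E => ->; exact: inH2 (set21 _ _) a1.
    + by move=> _ allS; move: (allS i); rewrite Si.
move=> /existsPn nb.
case: (boolP special) => Hsp.
  move: (Hsp) => /andP [cF /forallP allS].
  have getS U : U \in S -> exists i, sv i \in U.
    move=> /allbad /orP [/existsP [i /andP [Hop _]]|/andP [_ /existsP //]].
    by move: Hop; rewrite /openb (negbTE (allS i)).
  have : 1 < #|S| by apply: leq_trans HS; rewrite ltnS.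
  case/card_gt1P=> [U1 [U2 [U1S U2S Hne]]].
  have [i1 H1] := getS _ U1S; have [i2 H2] := getS _ U2S.
  exists [set U1; U2]; split.
  - by apply/subsetP=> U /set2P [->|->].
  - by apply/set0Pn; exists U1; rewrite set21.
  - split; first by move=> i Si; move: (allS i); rewrite Si.
    move=> _ _ l /inH [|[U' /set2P [->|->] xU]]; first by rewrite (negbTE (allS l)).
    * exists i2; split; last exact: inH2 (set22 _ _) H2.
      apply/eqP=> E; subst i2; case/eqP: Hne; exact: comp_eq (Hc _ U1S) (Hc _ U2S) xU H2.
    * exists i1; split; last exact: inH2 (set21 _ _) H1.
      apply/eqP=> E; subst i1; case/eqP: Hne; exact: comp_eq (Hc _ U1S) (Hc _ U2S) H1 xU.
exfalso; case/negP: nII.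
pose arm (U : {set T}) := odflt ord0 [pick i | openb F i && ((la i \in U) || (lb i \in U))].
have armP U : U \in S -> openb F (arm U) && ((la (arm U) \in U) || (lb (arm U) \in U)).
  move=> /allbad; rewrite /badU (negbTE Hsp) orbF /arm => /existsP [i Hi].
  by case: pickP => [j ->//|/(_ i)]; rewrite Hi.
have inj : {in S &, injective arm}.
  move=> U1 U2 U1S U2S Ea.
  have := armP _ U1S; have := armP _ U2S; rewrite Ea.
  move: (arm U2) => i /andP [Hop /orP [a2|b2]] /andP [_ /orP [a1|b1]].
  - exact: comp_eq (Hc _ U1S) (Hc _ U2S) a1 a2.
  - by case/negP: (nb i); rewrite Hop /=; apply/andP; split; apply/existsP; [exists U2|exists U1]; apply/andP.
  - by case/negP: (nb i); rewrite Hop /=; apply/andP; split; apply/existsP; [exists U1|exists U2]; apply/andP.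
  - exact: comp_eq (Hc _ U1S) (Hc _ U2S) b1 b2.
have Hcard := card_in_imset inj.
have allop i : openb F i.
  case: (boolP (i \in arm @: S)) => [/imsetP [U US ->]|ni]; first by case/andP: (armP _ US).
  have Hs : arm @: S \subset [set~ i] by apply/subsetP=> j Hj; rewrite !inE; apply/eqP=> E; subst j; by rewrite Hj in ni.
  have := leq_trans HS (leq_trans (eq_leq (esym Hcard)) (subset_leq_card Hs)).
  by rewrite cardsC1 card_ord ltnn.
rewrite /II; apply/andP; split.
  by apply/forallP=> i; case/andP: (allop i).
rewrite /MS.
have ->: [set i | sv i \notin F] = set0 by apply/setP=> i; rewrite !inE; case/andP: (allop i) => ->.
by rewrite cards0.
Qed.

Lemma SD_T : SD setT = 0.
Proof.
rewrite /SD; have ->: [set i | dd setT i] = set0 by apply/setP=> i; rewrite !inE /dd !in_setT.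
by rewrite cards0.
Qed.

Lemma AllD0 : AllD set0.
Proof. by apply/forallP=> i; rewrite /dd !inE. Qed.

Lemma SD0 : SD set0 = k.+1.
Proof. exact: SD_all AllD0. Qed.

Lemma II0 : II set0 = false.
Proof.
rewrite /II /MS.
have ->: [set i | sv i \notin (set0 : {set T})] = setT by apply/setP=> i; rewrite !inE.
by rewrite cardsT card_ord ltnn andbF.
Qed.

Lemma EE0 : EE set0.
Proof. by rewrite /EE inE; apply/forallP=> i; rewrite !inE. Qed.

Lemma safe_T F : 0 < k -> safe F setT.
Proof.
move=> k0; split; first by move=> *; rewrite !in_setT.
move=> _ _ i _; exists (if i == ord0 then ord_max else ord0); split; last by rewrite in_setT.
case: (eqVneq i ord0) => [Ei|Hi].
- rewrite Ei /=; apply/eqP=> E; have := congr1 val E => /= Ek; rewrite Ek in k0.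
  by [].
- by rewrite /= eq_sym.
Qed.

Lemma lowZk : 0 < k -> forall F t, zq_win e true k F t -> SD F <= t + II F.
Proof.
move=> k0; apply: (zq_ind2 (P := fun F t => SD F <= t + II F)).
- by move=> F t ->; rewrite SD_T.
- move=> F t v _ _ IH.
  have h1 := SD_step F v; have h2 := SD_le F.
  case IF': (II (v |: F)) IH => IH.
  + move: IF' => /andP [AD _]; rewrite (SD_all AD) in IH; lia.
  + lia.
- move=> F t u v hf _ IH.
  have := step_ok (safe_T F k0) hf; lia.
- move=> F t S _ Hc HS Hall.
  case IF: (II F).
  + have nz : S != set0 by rewrite -card_gt0; apply: leq_trans HS.
    have [u [v [hf _ IH]]] := Hall S (subxx S) nz.
    move: (II_step_gen v IF); rewrite IF; lia.
  + have [S' [sub nz sf]] := oracle_choice k0 (negbT IF) Hc HS.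
    have [u [v [hf _ IH]]] := Hall S' sub nz.
    move: (step_ok sf hf); rewrite IF; lia.
Qed.

Lemma tokEE F v : SD F + EE F <= SD (v |: F) + EE (v |: F) + 1.
Proof.
have h1 := SD_step F v.
case EF': (EE (v |: F)); first by case: (EE F); lia.
case EF: (EE F); last by lia.
suff : SD F <= SD (v |: F) by lia.
move: EF => /andP [cF /forallP nb].
move/negbT: EF'; rewrite /EE negb_and negbK => Hor.
apply: SD_sub => j; rewrite /dd => /andP [Ha Hb].
apply/andP; split; apply/eqP=> Ev; subst v; move: Hor.
- rewrite in_setU1 (negbTE cF) orbF => /orP [/eqP E|/forallPn [i]]; first by case: (neq_ca E).
  rewrite negbK !in_setU1 => /andP [/orP [/eqP /la_inj Ei|ai] /orP [/eqP E|bi]].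
  + by case: (neq_ab (esym E)).
  + by subst i; rewrite bi in Hb.
  + by case: (neq_ab (esym E)).
  + by move: (nb i); rewrite ai bi.
- rewrite in_setU1 (negbTE cF) orbF => /orP [/eqP E|/forallPn [i]]; first by case: (neq_cb E).
  rewrite negbK !in_setU1 => /andP [/orP [/eqP E|ai] /orP [/eqP /lb_inj Ei|bi]].
  + by case: (neq_ab E).
  + by case: (neq_ab E).
  + by subst i; rewrite ai in Ha.
  + by move: (nb i); rewrite ai bi.
Qed.

Lemma fillEE F u v : fill_step e setT F u v -> SD F + EE F <= SD (v |: F) + EE (v |: F).
Proof.
move=> [uF _ vF euv Hu].
have hS : SD F <= SD (v |: F).
  apply: SD_sub => j; rewrite /dd => /andP [Ha Hb].
  apply/andP; split; apply/eqP=> Ev; subst v.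
  + move: euv; rewrite e_sym => /nbr_la Eu; subst u.
    by have := Hu _ (in_setT _) (e_sb j) Hb => /esym /neq_ab.
  + move: euv; rewrite e_sym => /nbr_lb Eu; subst u.
    by have := Hu _ (in_setT _) (e_sa j) Ha => /neq_ab.
case EF: (EE F); last by lia.
case EF': (EE (v |: F)); first by lia.
exfalso; move: EF => /andP [cF /forallP nb].
move/negbT: EF'; rewrite /EE negb_and negbK => /orP [|/forallPn [i]].
- rewrite in_setU1 (negbTE cF) orbF => /eqP Ev; subst v.
  move: euv; rewrite e_sym => /nbr_c [i Eu]; subst u.
  case: (boolP (la i \in F)) => ai; last by have := Hu _ (in_setT _) (e_sa i) ai => /esym /neq_ca.
  case: (boolP (lb i \in F)) => bi; last by have := Hu _ (in_setT _) (e_sb i) bi => /esym /neq_cb.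
  by move: (nb i); rewrite ai bi.
- rewrite negbK !in_setU1 => /andP [/orP [/eqP Ea|ai] /orP [/eqP Eb|bi]].
  + by rewrite -Ea in Eb; case: (neq_ab (esym Eb)).
  + subst v; move: euv; rewrite e_sym => /nbr_la Eu; subst u.
    by have := Hu _ (in_setT _) (e_sc i) cF => /neq_ca.
  + subst v; move: euv; rewrite e_sym => /nbr_lb Eu; subst u.
    by have := Hu _ (in_setT _) (e_sc i) cF => /neq_cb.
  + by move: (nb i); rewrite ai bi.
Qed.

Lemma lowZ q : forall F t, zq_win e false q F t -> SD F + EE F <= t.
Proof.
apply: (zq_ind2 (P := fun F t => SD F + EE F <= t)).
- move=> F t ->; rewrite SD_T /EE in_setT; lia.
- move=> F t v _ _ IH; have := tokEE F v; lia.
- move=> F t u v hf _ IH; have := fillEE hf; lia.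
- by [].
Qed.

Lemma conn_iso (F : {set T}) z y : (forall w, e z w -> w \in F) ->
  connect (unfilled_rel e F) z y -> y = z.
Proof.
move=> Hz /connectP [p Hp ->].
case: p Hp => [//|w p] /= /andP [/and3P [ezw _ wF] _].
by rewrite (Hz _ ezw) in wF.
Qed.

Lemma token_add b q (A : seq T) : forall (F : {set T}) t, uniq A -> all (fun x => x \notin F) A ->
  zq_win e b q (F :|: [set x in A]) t -> zq_win e b q F (t + size A).
Proof.
elim: A => [|x A IH] F t.
- move=> _ _; rewrite addn0.
  have ->: F :|: [set x in [::]] = F by apply/setP=> y; rewrite !inE orbF.
  by [].
- move=> /= /andP [xA uA] /andP [xF aA] W.
  rewrite addnS; apply: (zq_token xF); apply: IH => //.
  + apply/allP=> y yA; rewrite in_setU1 negb_or (allP aA _ yA) andbT.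
    by apply/eqP=> E; subst y; rewrite yA in xA.
  + suff -> : (x |: F) :|: [set x0 in A] = F :|: [set x0 in x :: A] by [].
    apply/setP=> y; rewrite !inE.
    by case: (y == x); case: (y \in F); case: (y \in A).
Qed.

Lemma reach b q (P : {set T}) t : zq_win e b q P t -> forall n (F : {set T}), #|P :\: F| = n -> F \subset P ->
  (forall F' : {set T}, F \subset F' -> F' \subset P -> F' != P -> exists u v, fill_step e setT F' u v /\ v \in P) ->
  zq_win e b q F t.
Proof.
move=> W; elim=> [|n IH] F Hn FP Hyp.
- have : P :\: F == set0 by rewrite -cards_eq0 Hn.
  rewrite setD_eq0 => PF.
  have -> : F = P by apply/eqP; rewrite eqEsubset FP PF.
  exact: W.
- have nFP : F != P by apply/eqP=> E; rewrite E setDv cards0 in Hn.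
  have [u [v [hf vP]]] := Hyp F (subxx F) FP nFP.
  have vF : v \notin F by case: hf.
  apply: (zq_fill hf); apply: IH.
  + have := cardsD1 v (P :\: F); rewrite Hn !inE vF vP /= add1n => [[->]].
    apply: eq_card => x; rewrite !inE; by case: (x == v).
  + by rewrite subUset sub1set vP FP.
  + move=> F' H1 H2 H3; apply: Hyp H2 H3.
    by apply: subset_trans H1; apply: subsetUr.
Qed.

Lemma finish_force (F' : {set T}) i0 : (forall j, la j \in F') -> lb i0 \in F' -> F' != setT ->
  exists u v, fill_step e setT F' u v.
Proof.
move=> Ha Hb nT.
case: (boolP [exists i, sv i \notin F']) => [/existsP [i Si]|/existsPn Sall].
  exists (la i), (sv i); split => //; first exact: e_as.
  by move=> w _ /nbr_la.
case: (boolP (cc \in F')) => cF.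
  have [x xF] : exists x, x \notin F'.
    apply/existsP; apply: contraNT nT => /existsPn H.
    by apply/eqP/setP=> x; rewrite in_setT; move: (H x); rewrite negbK.
  case: (vcases x) xF => [->|[j [->|->|->]]] xF.
  - by rewrite cF in xF.
  - by move: (Sall j); rewrite negbK (negbTE xF).
  - by rewrite Ha in xF.
  - exists (sv j), (lb j); split => //; first by move: (Sall j); rewrite negbK.
    + exact: e_sb.
    + move=> w _ /nbr_s [->|->|->] //; by rewrite ?cF ?Ha.
exists (sv i0), cc; split => //; first by move: (Sall i0); rewrite negbK.
move=> w _ /nbr_s [->|->|->] //; by rewrite ?Ha ?Hb.
Qed.

Lemma laA j : la j \in [seq la i | i <- enum 'I_k.+1].
Proof. by apply: map_f; rewrite mem_enum. Qed.

Lemma upZ q : zq_win e false q set0 (k + 2).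
Proof.
pose A := lb ord0 :: [seq la i | i <- enum 'I_k.+1].
have sA : size A = k + 2 by rewrite /= size_map size_enum_ord addn2.
rewrite -sA -(add0n (size A)); apply: token_add.
- rewrite /= (map_inj_uniq la_inj) enum_uniq andbT.
  by apply/negP=> /mapP [i _ E]; case: (neq_ab (esym E)).
- by apply/allP=> x _; rewrite inE.
- apply: (reach (P := setT) (zq_done _ _ _ _ (erefl _)) (erefl _) (subsetT _)).
  move=> F' H1 _ H3.
  have [u [v hf]] : exists u v, fill_step e setT F' u v.
    apply: (finish_force (i0 := ord0)) H3.
    + by move=> j; apply: (subsetP H1); rewrite !inE /= laA orbT.
    + by apply: (subsetP H1); rewrite !inE /= ?eqxx.
  by exists u, v; rewrite in_setT.
Qed.

Definition P1 : {set T} := [set x | [exists j, (x == la j) || (x == sv j)]].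

Lemma laP1 j : la j \in P1.
Proof. by rewrite inE; apply/existsP; exists j; rewrite eqxx. Qed.
Lemma svP1 j : sv j \in P1.
Proof. by rewrite inE; apply/existsP; exists j; rewrite eqxx orbT. Qed.
Lemma lbP1 j : lb j \notin P1.
Proof.
rewrite inE; apply/existsPn=> i; apply/norP; split; apply/eqP=> E.
- exact: neq_ab (esym E).
- exact: neq_sb (esym E).
Qed.
Lemma ccP1 : cc \notin P1.
Proof. by rewrite inE; apply/existsPn=> i. Qed.

Lemma oracleP1 : zq_win e true k P1 0.
Proof.
pose S := [set [set lb i] | i : 'I_k.+1].
have SP U : U \in S -> exists i, U = [set lb i] by move=> /imsetP [i _ ->]; exists i.
apply: (zq_oracle (S := S)) => //.
- move=> U /SP [i ->]; exists (lb i); first exact: lbP1.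
  apply/setP=> y; rewrite !inE; apply/idP/idP => [/eqP ->|/conn_iso E].
  + exact: connect0.
  + by rewrite E // => w /nbr_lb ->; apply: svP1.
- rewrite card_imset ?cardT ?size_enum_ord //.
  move=> i j E; apply: lb_inj; apply/set1P; rewrite -E; exact: set11.
- move=> S' sub /set0Pn [U US'].
  have [i EU] := SP U (subsetP sub _ US').
  have lbH : lb i \in P1 :|: \bigcup_(U0 in S') U0 by rewrite in_setU; apply/orP; right; apply/bigcupP; exists U => //; rewrite EU set11.
  exists (sv i), (lb i); split.
  + split => //; [exact: svP1|exact: lbP1|exact: e_sb|].
    move=> w wH /nbr_s [Ew|Ew|Ew]; subst w => //.
    * case/inH: wH => [|[U' U'S' cU]]; first by rewrite (negbTE ccP1).
      have [j EU'] := SP U' (subsetP sub _ U'S'); move: cU; rewrite EU' => /set1P E.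
      by case: (neq_cb E).
    * by rewrite laP1.
  + apply: (reach (P := setT) (zq_done _ _ _ _ (erefl _)) (erefl _) (subsetT _)).
    move=> F' H1 _ H3.
    have [u [v hf]] : exists u v, fill_step e setT F' u v.
      apply: (finish_force (i0 := i)) H3.
      * by move=> j; apply: (subsetP H1); rewrite in_setU1 laP1 orbT.
      * by apply: (subsetP H1); rewrite in_setU1 eqxx.
    by exists u, v; rewrite in_setT.
Qed.

Lemma upZk : zq_win e true k set0 (k + 1).
Proof.
pose A := [seq la i | i <- enum 'I_k.+1].
have sA : size A = k + 1 by rewrite /= size_map size_enum_ord addn1.
rewrite -sA -(add0n (size A)); apply: token_add.
- by rewrite (map_inj_uniq la_inj) enum_uniq.
- by apply/allP=> x _; rewrite inE.
- apply: (reach oracleP1 (erefl _)).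
  + apply/subsetP=> x; rewrite in_setU in_set0 /= => xA; have : x \in A by move: xA; rewrite inE.
    by move=> /mapP [j _ ->]; exact: laP1.
  + move=> F' H1 H2 H3.
    have [x xP xF] : exists2 x, x \in P1 & x \notin F'.
      apply/exists_inP; apply: contraNT H3 => /exists_inPn H.
      by rewrite eqEsubset H2; apply/subsetP=> x xP; move: (H x xP); rewrite negbK.
    move: (xP); rewrite inE => /existsP [j /orP [/eqP Ex|/eqP Ex]]; subst x.
    * by move: xF; rewrite (subsetP H1) //= !inE /= laA.
    * exists (la j), (sv j); split; last exact: svP1.
      split => //; [|exact: e_as|by move=> w _ /nbr_la].
      by apply: (subsetP H1); rewrite !inE /= laA.
Qed.

Lemma zero_win b q F t : zq_win e b q F t -> F = set0 -> t = 0 -> False.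
Proof.
case=> [F' t' HT|F' t' v _ _|F' t' u v hf _|F' t' S _ _ HS Hall] EF Et; subst F'.
- by move: (in_setT cc); rewrite EF inE.
- by [].
- by case: hf; rewrite inE.
- have nz : S != set0 by rewrite -card_gt0; apply: leq_trans HS.
  by have [u [v [[]]]] := Hall S (subxx S) nz; rewrite inE.
Qed.

End Tree.

Theorem proposition2p4 (k : nat) :
  #|star_vertex k| = 3 * k + 4 /\
  is_Z (star_tree k) (k + 2) /\ is_Zq (star_tree k) k (k + 1).
Proof.
split; first by rewrite /star_vertex card_option card_prod !card_ord; lia.
split.
- split; first exact: upZ.
  move=> t W; have := lowZ W; rewrite SD0 EE0 /=; lia.
- split; first exact: upZk.
  move=> t W; case: (posnP k) => [k0|k0].
  + subst k; case: t W => [W|t _]; last by lia.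
    by case: (zero_win W (erefl _) (erefl _)).
  + have := lowZk k0 W; rewrite SD0 II0 /=; lia.
Qed.
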